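(* Fix $c\in\mathcal{C}'$ with $\mathcal{S}(c)\setminus\{c\}\neq\emptyset$ and arbitrary values of all messages, and let $b_t$, $t\in\mathcal{T}$, be the corresponding beliefs. Let $\boldsymbol\lambda_{c,\mathcal{S}(c)}$ be the current block of messages out of $c$ and $\boldsymbol\lambda^*_{c,\mathcal{S}(c)}$ the updated block. Then the dual decrease $d(c)=g_c(\boldsymbol\lambda_{c,\mathcal{S}(c)})-g_c(\boldsymbol\lambda^*_{c,\mathcal{S}(c)})$ satisfies $$d(c)=\max_{\mathbf{x}_c}b_c(\mathbf{x}_c)+\sum_{s\in\mathcal{S}(c)\setminus\{c\}}\max_{\mathbf{x}_s}b_s(\mathbf{x}_s)-\max_{\mathbf{x}_c}\Big[b_c(\mathbf{x}_c)+\sum_{s\in\mathcal{S}(c)\setminus\{c\}}b_s(\mathbf{x}_s)\Big]\geqslant 0.$$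
   Context: Let $\mathcal{V}=\{1,\dots,n\}$; each variable $x_i$ takes values in a finite set, and for $s\subseteq\mathcal{V}$ write $\mathbf{x}_s=(x_i)_{i\in s}$. Let $\mathcal{C}$ be a collection of subsets of $\mathcal{V}$ with real potentials $\theta_c(\mathbf{x}_c)$, $c\in\mathcal{C}$. Let $\mathcal{C}'$ be a collection of subsets of $\mathcal{V}$ and for each $c\in\mathcal{C}'$ let $\mathcal{S}(c)$ be a collection of subsets of $c$ (possibly containing $c$), with $\mathcal{C}'\cup\bigcup_{c\in\mathcal{C}'}\mathcal{S}(c)\supseteq\mathcal{C}$; put $\mathcal{T}=\mathcal{C}'\cup\bigcup_{c\in\mathcal{C}'}\mathcal{S}(c)$. Messages are reals $\lambda_{c\to s}(\mathbf{x}_s)$, $c\in\mathcal{C}'$, $s\in\mathcal{S}(c)\setminus\{c\}$. For $t\in\mathcal{T}$: $\hat\theta_t=\mathbb{1}(t\in\mathcal{C})\theta_t$; $\gamma_t(\mathbf{x}_t)=\mathbb{1}(t\in\mathcal{C}')\sum_{\hat s\in\mathcal{S}(t)\setminus\{t\}}\lambda_{t\to\hat s}(\mathbf{x}_{\hat s})$; $\lambda_t(\mathbf{x}_t)=\sum_{c'\in\mathcal{C}':\,t\in\mathcal{S}(c')\setminus\{c'\}}\lambda_{c'\to t}(\mathbf{x}_t)$; beliefs $b_t=\hat\theta_t+\lambda_t-\gamma_t$. For $s\in\mathcal{S}(c)\setminus\{c\}$, $\lambda_s^{-c}(\mathbf{x}_s)=\sum_{\hat c\in\mathcal{C}':\,\hat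 c\ne c,\ s\in\mathcal{S}(\hat c)\setminus\{\hat c\}}\lambda_{\hat c\to s}(\mathbf{x}_s)$. With all messages not of the form $\lambda_{c\to s}$ held fixed, $g_c$ is the function of the block $\boldsymbol\lambda_{c,\mathcal{S}(c)}=(\lambda_{c\to s}(\mathbf{x}_s))_{s\in\mathcal{S}(c)\setminus\{c\}}$ given by $g_c=\max_{\mathbf{x}_c}[\hat\theta_c(\mathbf{x}_c)-\sum_{s\in\mathcal{S}(c)\setminus\{c\}}\lambda_{c\to s}(\mathbf{x}_s)+\lambda_c(\mathbf{x}_c)]+\sum_{s\in\mathcal{S}(c)\setminus\{c\}}\max_{\mathbf{x}_s}[\hat\theta_s(\mathbf{x}_s)-\gamma_s(\mathbf{x}_s)+\lambda^{-c}_s(\mathbf{x}_s)+\lambda_{c\to s}(\mathbf{x}_s)]$. The updated block is $\lambda^*_{c\to s}(\mathbf{x}_s)=-\hat\theta_s(\mathbf{x}_s)+\gamma_s(\mathbf{x}_s)-\lambda_s^{-c}(\mathbf{x}_s)+\frac{1}{|\mathcal{S}(c)\setminus\{c\}|}\max_{\mathbf{x}_{c\setminus s}}[\hat\theta_c(\mathbf{x}_c)+\lambda_c(\mathbf{x}_c)+\sum_{\hat s\in\mathcal{S}(c)\setminus\{c\}}(\hat\theta_{\hat s}-\gamma_{\hat s}+\lambda^{-c}_{\hat s})(\mathbf{x}_{\hat s})]$. *)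

(* Defs.v *)
From HB Require Import structures.
From mathcomp Require Import all_boot all_order all_algebra.
Set Implicit Arguments. Unset Strict Implicit. Unset Printing Implicit Defensive.
Import Order.TTheory GRing.Theory Num.Theory.
Local Open Scope ring_scope.

(* A function of x_s is represented as a
   function of full assignments that only depends on the coordinates in s
   ([local s f]). *)

Section MPLP.
Variables (R : realFieldType) (n : nat) (X : 'I_n -> finType).

Definition assign := @fprod 'I_n X.

Definition agree (s : {set 'I_n}) (x y : assign) : bool :=
  [forall i, (i \in s) ==> (x i == y i)].

Definition local (s : {set 'I_n}) (f : assign -> R) : Prop :=
  forall x y, agree s x y -> f x = f y.

(* max over all assignments (max_{x} f(x)); 0 if there is no assignment *)
Definition maxf (f : assign -> R) : R :=
  match [pick x : assign] with
  | Some x0 => \big[Num.max/f x0]_(x : assign) f x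
  | None => 0
  end.

(* max over the assignments agreeing with x on s, i.e. max_{x_{c \ s}} when f
   depends only on x_c; the result is a function of x_s *)
Definition maxagree (s : {set 'I_n}) (f : assign -> R) (x : assign) : R :=
  \big[Num.max/f x]_(y : assign | agree s x y) f y.

Variables (C Cp : {set {set 'I_n}}) (S : {set 'I_n} -> {set {set 'I_n}})
  (theta : {set 'I_n} -> assign -> R)
  (lam : {set 'I_n} -> {set 'I_n} -> assign -> R).
(* lam c s x  is the message  lambda_{c -> s}(x_s)  (meaningful for
   c \in Cp, s \in S c :\ c) *)

Definition Sc (c : {set 'I_n}) : {set {set 'I_n}} := S c :\ c.

Definition Tcoll : {set {set 'I_n}} := Cp :|: \bigcup_(c in Cp) S c.

Definition thetah (t : {set 'I_n}) (x : assign) : R :=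
  if t \in C then theta t x else 0.

Definition gamma (t : {set 'I_n}) (x : assign) : R :=
  if t \in Cp then \sum_(s in Sc t) lam t s x else 0.

Definition lamin (t : {set 'I_n}) (x : assign) : R :=
  \sum_(c' in Cp | t \in Sc c') lam c' t x.

Definition belief (t : {set 'I_n}) (x : assign) : R :=
  thetah t x + lamin t x - gamma t x.

Definition lamminus (c s : {set 'I_n}) (x : assign) : R :=
  \sum_(c' in Cp | (c' != c) && (s \in Sc c')) lam c' s x.

(* g_c as a function of the block mu (mu s = lambda_{c -> s}, s \in S(c)\{c}),
   all other messages held at their values in lam *)
Definition g (c : {set 'I_n}) (mu : {set 'I_n} -> assign -> R) : R :=
  maxf (fun x => thetah c x - \sum_(s in Sc c) mu s x + lamin c x)
  + \sum_(s in Sc c)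
      maxf (fun x => thetah s x - gamma s x + lamminus c s x + mu s x).

Definition lamstar (c : {set 'I_n}) (s : {set 'I_n}) (x : assign) : R :=
  - thetah s x + gamma s x - lamminus c s x
  + (#|Sc c|%:R)^-1 *
    maxagree s (fun y => thetah c y + lamin c y
                  + \sum_(sh in Sc c) (thetah sh y - gamma sh y + lamminus c sh y)) x.

Definition dualdec (c : {set 'I_n}) : R := g c (lam c) - g c (lamstar c).

End MPLP.

(* Main.v *)
Require Import Defs.
From HB Require Import structures.
From mathcomp Require Import all_boot all_order all_algebra.
From mathcomp Require Import ring lra.
Import Order.TTheory GRing.Theory Num.Theory.
Local Open Scope ring_scope.
Set Implicit Arguments.
Section M.
Variables (R : realFieldType) (n : nat) (X : 'I_n -> finType).
Implicit Types f g : assign X -> R.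

Lemma maxf_none f : (forall x : assign X, False) -> maxf f = 0.
Proof. by move=> H; rewrite /maxf; case: pickP => // x; case: (H x). Qed.

Lemma maxf_ext f g : (forall x, f x = g x) -> maxf f = maxf g.
Proof. by move=> H; rewrite /maxf; case: pickP => // x0 _; rewrite H; apply: eq_bigr. Qed.

Lemma bigmax_ub (I : finType) (P : pred I) (F : I -> R) a i :
  P i -> F i <= \big[Num.max/a]_(j | P j) F j.
Proof. by move=> Pi; rewrite (bigD1 i) //= le_max lexx. Qed.

Lemma bigmax_lb (I : finType) (P : pred I) (F : I -> R) a :
  a <= \big[Num.max/a]_(j | P j) F j.
Proof.
apply: (big_rec (fun v => a <= v)) => //= i v _ Hv.
by rewrite le_max Hv orbT.
Qed.

Lemma bigmax_le (I : finType) (P : pred I) (F : I -> R) a M :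
  a <= M -> (forall j, P j -> F j <= M) -> \big[Num.max/a]_(j | P j) F j <= M.
Proof.
move=> Ha H; apply: (big_ind (fun v => v <= M)) => //= u v Hu Hv.
by rewrite ge_max Hu.
Qed.

Variable x0 : assign X.

Lemma maxf_ge f x : f x <= maxf f.
Proof. by rewrite /maxf; case: pickP => [y _|/(_ x0)//]; apply: bigmax_ub. Qed.

Lemma maxf_le f M : (forall x, f x <= M) -> maxf f <= M.
Proof. by move=> H; rewrite /maxf; case: pickP => [y _|/(_ x0)//]; apply: bigmax_le. Qed.

Lemma maxf_att f : exists x, maxf f = f x.
Proof.
rewrite /maxf; case: pickP => [y _|/(_ x0)//].
apply: (big_ind (fun v => exists x, v = f x)); first by exists y.
- by move=> u v [a ->] [b ->]; case: (leP (f a) (f b)) => _; [exists b|exists a].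
- by move=> j _; exists j.
Qed.
End M.

Theorem proposition2 (R : realFieldType) (n : nat) (X : 'I_n -> finType)
  (C Cp : {set {set 'I_n}}) (S : {set 'I_n} -> {set {set 'I_n}})
  (theta : {set 'I_n} -> assign X -> R)
  (lam : {set 'I_n} -> {set 'I_n} -> assign X -> R)
  (c : {set 'I_n}) :
  (forall i, 0 < #|X i|)%N ->
  (forall c', c' \in Cp -> forall s, s \in S c' -> s \subset c') ->
  C \subset Tcoll Cp S ->
  (forall t, t \in C -> local t (theta t)) ->
  (forall c', c' \in Cp -> forall s, s \in Sc S c' -> local s (lam c' s)) ->
  c \in Cp ->
  Sc S c != set0 ->
  let b := belief C Cp S theta lam in
  dualdec C Cp S theta lam c
    = maxf (b c) + \sum_(s in Sc S c) maxf (b s)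
      - maxf (fun x => b c x + \sum_(s in Sc S c) b s x)
  /\ 0 <= dualdec C Cp S theta lam c.
Proof.
move=> _ _ _ _ _ Cpc K0 b.
case: (pickP (fun _ : assign X => true)) => [x0 _ | H]; last first.
  have Z : forall f : assign X -> R, maxf f = 0.
    by move=> f; apply: maxf_none => x; move: (H x).
  have -> : dualdec C Cp S theta lam c = 0.
    rewrite /dualdec /g !Z.
    under eq_bigr do rewrite Z.
    under [X in _ - (_ + X)]eq_bigr do rewrite Z.
    by rewrite subrr.
  rewrite !Z; under eq_bigr do rewrite Z.
  by rewrite big1_eq addr0 subrr.
have mge := @maxf_ge R _ _ x0.
have mle := @maxf_le R _ _ x0.
set K := Sc S c.
set k : R := #|K|%:R.
have k0 : k != 0 by rewrite pnatr_eq0 -lt0n card_gt0.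
have k1 : k^-1 * k = 1 by rewrite mulVf.
have hbc : forall x, b c x = thetah C theta c x + lamin Cp S lam c x - \sum_(s in K) lam c s x.
  by move=> x; rewrite /b /belief /gamma Cpc.
set A := fun s x => thetah C theta s x - gamma Cp S lam s x + lamminus Cp S lam c s x.
have hbs : forall s x, s \in K -> b s x = A s x + lam c s x.
  move=> s x sK; rewrite /b /belief /A /lamin (bigD1 c) /=; last by rewrite Cpc sK.
  rewrite /lamminus.
  have -> : \sum_(i | (i \in Cp) && (s \in Sc S i) && (i != c)) lam i s x =
            \sum_(c' in Cp | (c' != c) && (s \in Sc S c')) lam c' s x.
    by apply: eq_bigl => i; case: (i \in Cp); case: (s \in Sc S i); case: (i != c).
  ring.
set G0 := fun y => thetah C theta c y + lamin Cp S lam c y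
                  + \sum_(sh in K) (thetah C theta sh y - gamma Cp S lam sh y + lamminus Cp S lam c sh y).
set F := fun x => b c x + \sum_(s in K) b s x.
have hGF : forall x, G0 x = F x.
  move=> x; rewrite /G0 /F hbc.
  under [X in _ = _ + X]eq_bigr => s sK do rewrite hbs //.
  rewrite [X in _ = _ + X]big_split /= /A /=; ring.
set M := fun s x => maxagree s G0 x.
have ML : forall s x, M s x <= maxf G0.
  by move=> s x; apply: bigmax_le => [|y _]; apply: mge.
have MG : forall s x, G0 x <= M s x by move=> s x; apply: bigmax_lb.
have [xs Hxs] := @maxf_att R _ _ x0 G0.
have Mxs : forall s, M s xs = G0 xs.
  by move=> s; apply/le_anti; rewrite MG -Hxs ML.
have kge : 0 <= k^-1 by rewrite invr_ge0 ler0n.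
have T2 : forall s, s \in K ->
   maxf (fun x => thetah C theta s x - gamma Cp S lam s x + lamminus Cp S lam c s x
          + lamstar C Cp S theta lam c s x) = k^-1 * maxf G0.
  move=> s sK.
  rewrite (@maxf_ext R _ _ _ (fun x => k^-1 * M s x)); last by move=> x; rewrite /lamstar /M; ring.
  apply/le_anti; apply/andP; split.
    by apply: mle => x; apply: ler_wpM2l.
  by rewrite Hxs -(Mxs s); apply: mge.
have T1 : maxf (fun x => thetah C theta c x - \sum_(s in K) lamstar C Cp S theta lam c s x
             + lamin Cp S lam c x) = 0.
  have E : forall x, thetah C theta c x - \sum_(s in K) lamstar C Cp S theta lam c s x
             + lamin Cp S lam c x = G0 x - k^-1 * \sum_(s in K) M s x.
    move=> x.
    have -> : \sum_(s in K) lamstar C Cp S theta lam c s x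
        = k^-1 * \sum_(s in K) M s x - \sum_(s in K) A s x.
      by rewrite mulr_sumr -sumrB; apply: eq_bigr => s _; rewrite /lamstar /M /A; ring.
    rewrite /G0 /A; ring.
  rewrite (@maxf_ext R _ _ _ _ E).
  have SG : forall x, \sum_(s in K) G0 x = k * G0 x.
    by move=> x; rewrite sumr_const -mulr_natl.
  apply/le_anti; apply/andP; split.
    apply: mle => x; rewrite subr_le0.
    have : k * G0 x <= \sum_(s in K) M s x by rewrite -SG; apply: ler_sum => s _.
    move=> /(ler_wpM2l kge); rewrite mulrA k1 mul1r //.
  apply: le_trans (mge _ xs) => /=.
  under eq_bigr do rewrite Mxs.
  by rewrite SG mulrA k1 mul1r subrr.
have dE : dualdec C Cp S theta lam c = maxf (b c) + \sum_(s in K) maxf (b s) - maxf F.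
  rewrite /dualdec /g T1 (eq_bigr _ T2) sumr_const -mulr_natl mulrA (mulrC k) k1 mul1r add0r.
  rewrite (@maxf_ext R _ _ _ _ hGF); congr (_ + _ - _).
    by apply: maxf_ext => x; rewrite hbc; ring.
  by apply: eq_bigr => s sK; apply: maxf_ext => x; rewrite hbs.
split; first exact: dE.
rewrite dE subr_ge0; apply: mle => x; rewrite /F.
apply: lerD; first exact: mge.
by apply: ler_sum => s _; apply: mge.
Qed.
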